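(* Let $\lambda_0,\omega\in\mathbb{C}$ with $\omega\neq0$, let $\lambda_j=\lambda_0+j\omega$ for $j=0,\dots,n$, and let $a\ne b$ be real with $e^{\omega(b-a)}\neq1$. For $k=0,\dots,n$ define $$p_{n,k}(x):=\frac{e^{\lambda_0(x-a)}}{k!\,\omega^k}\big(e^{\omega(x-a)}-1\big)^k\left(\frac{1-e^{\omega(x-b)}}{1-e^{\omega(a-b)}}\right)^{n-k}.$$ Then each $p_{n,k}$ belongs to $E_{(\lambda_0,\dots,\lambda_n)}$, has a zero of order exactly $k$ at $a$ and a zero of order exactly $n-k$ at $b$, and satisfies $k!\lim_{x\to a}p_{n,k}(x)/(x-a)^k=1$; i.e. $p_{n,k}$, $k=0,\dots,n$, is the Bernstein basis of $E_{(\lambda_0,\dots,\lambda_n)}$ with respect to $a,b$.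
   Context: $E_{(\lambda_0,\dots,\lambda_n)}$ denotes the space of all $f\in C^\infty(\mathbb{R},\mathbb{C})$ with $(\frac{d}{dx}-\lambda_0)\cdots(\frac{d}{dx}-\lambda_n)f=0$. A zero of order (exactly) $k$ at $a$ means $f(a)=\dots=f^{(k-1)}(a)=0$, $f^{(k)}(a)\neq0$. The Bernstein basis with respect to $a\ne b$ is the unique family $p_{n,k}\in E_{(\lambda_0,\dots,\lambda_n)}$, $k=0,\dots,n$, with a zero of order exactly $k$ at $a$, exactly $n-k$ at $b$, and $p_{n,k}^{(k)}(a)=1$. *)

(* Defs.v *)
From Stdlib Require Import Reals Lra List Arith Factorial.
Open Scope R_scope.

Record Cplx : Type := mkC { Re : R; Im : R }.

Definition RtoC (r : R) : Cplx := mkC r 0.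
Definition Czero : Cplx := RtoC 0.
Definition Cone : Cplx := RtoC 1.
Definition Cadd (z w : Cplx) : Cplx := mkC (Re z + Re w) (Im z + Im w).
Definition Copp (z : Cplx) : Cplx := mkC (- Re z) (- Im z).
Definition Csub (z w : Cplx) : Cplx := Cadd z (Copp w).
Definition Cmul (z w : Cplx) : Cplx :=
  mkC (Re z * Re w - Im z * Im w) (Re z * Im w + Im z * Re w).
Definition Cinv (z : Cplx) : Cplx :=
  let d := Re z * Re z + Im z * Im z in mkC (Re z / d) (- Im z / d).
Definition Cdiv (z w : Cplx) : Cplx := Cmul z (Cinv w).
Fixpoint Cpow (z : Cplx) (n : nat) : Cplx :=
  match n with O => Cone | S m => Cmul z (Cpow z m) end.
Definition Cexp (z : Cplx) : Cplx :=
  mkC (exp (Re z) * cos (Im z)) (exp (Re z) * sin (Im z)).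

Definition has_deriv (f f' : R -> Cplx) : Prop :=
  forall x : R,
    derivable_pt_lim (fun t => Re (f t)) x (Re (f' x)) /\
    derivable_pt_lim (fun t => Im (f t)) x (Im (f' x)).

Inductive Dn : nat -> (R -> Cplx) -> (R -> Cplx) -> Prop :=
| Dn_O : forall f, Dn O f f
| Dn_S : forall n f f' g, has_deriv f f' -> Dn n f' g -> Dn (S n) f g.

Definition smooth (f : R -> Cplx) : Prop := forall n, exists g, Dn n f g.

(** [applyL [l_0; ...; l_n] f g] : g = (d/dx - l_0) ... (d/dx - l_n) f
    (constant-coefficient operators commute, so the order is immaterial). *)
Inductive applyL : list Cplx -> (R -> Cplx) -> (R -> Cplx) -> Prop :=
| applyL_nil : forall f, applyL nil f f
| applyL_cons : forall l ls f f' g,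
    has_deriv f f' ->
    applyL ls (fun x => Csub (f' x) (Cmul l (f x))) g ->
    applyL (l :: ls) f g.

Definition in_E (ls : list Cplx) (f : R -> Cplx) : Prop :=
  smooth f /\ applyL ls f (fun _ => Czero).

Definition deriv_at (n : nat) (f : R -> Cplx) (a : R) (v : Cplx) : Prop :=
  exists g, Dn n f g /\ g a = v.

Definition zero_of_order (k : nat) (f : R -> Cplx) (a : R) : Prop :=
  (forall j, (j < k)%nat -> deriv_at j f a Czero) /\
  exists v, deriv_at k f a v /\ v <> Czero.

Definition lams (l0 om : Cplx) (n : nat) : list Cplx :=
  map (fun j => Cadd l0 (Cmul (RtoC (INR j)) om)) (seq 0 (S n)).

Definition pnk (l0 om : Cplx) (a b : R) (n k : nat) (x : R) : Cplx :=
  Cmul (Cmul (Cdiv (Cexp (Cmul l0 (RtoC (x - a))))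
                   (Cmul (RtoC (INR (fact k))) (Cpow om k)))
             (Cpow (Csub (Cexp (Cmul om (RtoC (x - a)))) Cone) k))
       (Cpow (Cdiv (Csub Cone (Cexp (Cmul om (RtoC (x - b)))))
                   (Csub Cone (Cexp (Cmul om (RtoC (a - b))))))
             (n - k)).

(* Main.v *)
Require Import Defs.
From Stdlib Require Import Reals List Arith Factorial Lra Lia Field Ring.
From Stdlib Require Import FunctionalExtensionality Classical.
Open Scope R_scope.

Lemma Ceq : forall z w : Cplx, Re z = Re w -> Im z = Im w -> z = w.
Proof. intros [a b] [c d]; simpl; intros; subst; reflexivity. Qed.

Lemma Cring : ring_theory Czero Cone Cadd Cmul Csub Copp (@eq Cplx).
Proof.
  constructor; intros; apply Ceq;
  unfold Czero, Cone, RtoC, Cadd, Csub, Copp, Cmul; simpl; ring.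
Qed.

Lemma Cfield : field_theory Czero Cone Cadd Cmul Csub Copp Cdiv Cinv (@eq Cplx).
Proof.
  constructor.
  - exact Cring.
  - intro H. injection H. lra.
  - reflexivity.
  - intros [x y] H.
    assert (Hd : x*x+y*y <> 0).
    { intro E. apply H. assert (x = 0) by nra. assert (y = 0) by nra. subst. reflexivity. }
    apply Ceq; unfold Cinv, Cmul, Cone, RtoC; simpl; field; auto.
Qed.
Add Field Cfield : Cfield.

Lemma RtoC_add x y : RtoC (x + y) = Cadd (RtoC x) (RtoC y).
Proof. apply Ceq; simpl; ring. Qed.
Lemma RtoC_mul x y : RtoC (x * y) = Cmul (RtoC x) (RtoC y).
Proof. apply Ceq; simpl; ring. Qed.
Lemma RtoC_sub x y : RtoC (x - y) = Csub (RtoC x) (RtoC y).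
Proof. apply Ceq; simpl; ring. Qed.
Lemma RtoC0 : RtoC 0 = Czero. Proof. reflexivity. Qed.
Lemma RtoC1 : RtoC 1 = Cone. Proof. reflexivity. Qed.
Lemma RtoC_INR_S m : RtoC (INR (S m)) = Cadd (RtoC (INR m)) Cone.
Proof. rewrite S_INR, RtoC_add; reflexivity. Qed.
Lemma RtoC_neq0 r : r <> 0 -> RtoC r <> Czero.
Proof. intros H E. injection E. auto. Qed.

Lemma Cexp_add z w : Cexp (Cadd z w) = Cmul (Cexp z) (Cexp w).
Proof.
  destruct z as [a b], w as [c d]. apply Ceq; unfold Cexp, Cadd, Cmul; simpl;
  rewrite exp_plus; [rewrite cos_plus | rewrite sin_plus]; ring.
Qed.
Lemma Cexp_zero : Cexp Czero = Cone.
Proof. apply Ceq; unfold Cexp, Czero, Cone, RtoC; simpl; rewrite exp_0;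
  [rewrite cos_0 | rewrite sin_0]; ring. Qed.
Lemma Cexp_neq0 z : Cexp z <> Czero.
Proof.
  destruct z as [a b]; unfold Cexp, Czero, RtoC; simpl. intro E. injection E. intros E2 E1.
  pose proof (exp_pos a). pose proof (sin2_cos2 b). unfold Rsqr in *.
  assert (cos b = 0) by (apply (Rmult_eq_reg_l (exp a)); lra).
  assert (sin b = 0) by (apply (Rmult_eq_reg_l (exp a)); lra).
  rewrite H1, H2 in H0. lra.
Qed.
Lemma Cexp_self mu s : Cexp (Cmul mu (RtoC (s - s))) = Cone.
Proof. replace (s - s) with 0 by ring. rewrite RtoC0.
  replace (Cmul mu Czero) with Czero by ring. apply Cexp_zero. Qed.

Lemma Cmul_integral z w : Cmul z w = Czero -> z = Czero \/ w = Czero.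
Proof.
  intro H. destruct (classic (z = Czero)) as [Hz|Hz]; [left; auto|right].
  replace w with (Cmul (Cinv z) (Cmul z w)) by (field; auto).
  rewrite H. ring.
Qed.
Lemma Cmul_neq0 z w : z <> Czero -> w <> Czero -> Cmul z w <> Czero.
Proof. intros H1 H2 H. destruct (Cmul_integral _ _ H); auto. Qed.
Lemma Cpow_neq0 z m : z <> Czero -> Cpow z m <> Czero.
Proof. intro H; induction m; simpl. intro E; injection E; lra. apply Cmul_neq0; auto. Qed.
Lemma Cinv_neq0 z : z <> Czero -> Cinv z <> Czero.
Proof. intros H E. assert (Cmul (Cinv z) z = Cone) by (field; auto).
  rewrite E in H0. replace (Cmul Czero z) with Czero in H0 by ring.
  injection H0; lra. Qed.
Lemma Cpow_one m : Cpow Cone m = Cone.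
Proof. induction m; simpl; [reflexivity| rewrite IHm; ring]. Qed.
Lemma Cpow_mul_R z s k : Cpow (Cmul z (RtoC s)) k = Cmul (Cpow z k) (RtoC (s ^ k)).
Proof. induction k; simpl. rewrite RtoC1; ring. rewrite IHk, RtoC_mul; ring. Qed.
Lemma Re_RtoC_mul r z : Re (Cmul (RtoC r) z) = r * Re z.
Proof. simpl; ring. Qed.
Lemma Im_RtoC_mul r z : Im (Cmul (RtoC r) z) = r * Im z.
Proof. simpl; ring. Qed.

Lemma dpl_eq f x l l' : derivable_pt_lim f x l -> l = l' -> derivable_pt_lim f x l'.
Proof. intros; subst; auto. Qed.
Lemma dpl_fext f g x l : (forall t, f t = g t) -> derivable_pt_lim f x l -> derivable_pt_lim g x l.
Proof. intros H; replace g with f; auto. apply functional_extensionality; auto. Qed.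
Lemma dpl_mul f g x lf lg : derivable_pt_lim f x lf -> derivable_pt_lim g x lg ->
  derivable_pt_lim (fun t => f t * g t) x (lf * g x + f x * lg).
Proof. apply derivable_pt_lim_mult. Qed.
Lemma dpl_plus f g x lf lg : derivable_pt_lim f x lf -> derivable_pt_lim g x lg ->
  derivable_pt_lim (fun t => f t + g t) x (lf + lg).
Proof. apply derivable_pt_lim_plus. Qed.
Lemma dpl_const c x : derivable_pt_lim (fun _ => c) x 0.
Proof. apply derivable_pt_lim_const. Qed.
Lemma dpl_lin p x : derivable_pt_lim (fun t => p * t) x p.
Proof. eapply dpl_eq. apply (derivable_pt_lim_scal id p x 1). apply derivable_pt_lim_id. ring. Qed.
Lemma dpl_exp p x : derivable_pt_lim (fun t => exp (p * t)) x (p * exp (p * x)).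
Proof. eapply dpl_eq. apply (derivable_pt_lim_comp (fun t => p * t) exp).
  apply dpl_lin. apply derivable_pt_lim_exp. simpl; ring. Qed.
Lemma dpl_cos q x : derivable_pt_lim (fun t => cos (q * t)) x (- q * sin (q * x)).
Proof. eapply dpl_eq. apply (derivable_pt_lim_comp (fun t => q * t) cos).
  apply dpl_lin. apply derivable_pt_lim_cos. simpl; ring. Qed.
Lemma dpl_sin q x : derivable_pt_lim (fun t => sin (q * t)) x (q * cos (q * x)).
Proof. eapply dpl_eq. apply (derivable_pt_lim_comp (fun t => q * t) sin).
  apply dpl_lin. apply derivable_pt_lim_sin. simpl; ring. Qed.
Lemma has_deriv_ext f g f' g' : (forall x, f x = g x) -> (forall x, f' x = g' x) ->
  has_deriv f f' -> has_deriv g g'.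
Proof.
  intros H1 H2 H. replace g with f by (apply functional_extensionality; auto).
  replace g' with f' by (apply functional_extensionality; auto). exact H.
Qed.
Lemma hd_const c : has_deriv (fun _ => c) (fun _ => Czero).
Proof. intro x; split; apply dpl_const. Qed.
Lemma hd_add f g f' g' : has_deriv f f' -> has_deriv g g' ->
  has_deriv (fun x => Cadd (f x) (g x)) (fun x => Cadd (f' x) (g' x)).
Proof. intros Hf Hg x; destruct (Hf x), (Hg x); split; simpl; apply dpl_plus; auto. Qed.
Lemma hd_mul f g f' g' : has_deriv f f' -> has_deriv g g' ->
  has_deriv (fun x => Cmul (f x) (g x))
            (fun x => Cadd (Cmul (f' x) (g x)) (Cmul (f x) (g' x))).
Proof.
  intros Hf Hg x; destruct (Hf x) as [H1 H2], (Hg x) as [H3 H4]; split; simpl.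
  - eapply dpl_eq. apply (derivable_pt_lim_minus (fun t => Re (f t) * Re (g t)) (fun t => Im (f t) * Im (g t))); apply dpl_mul; eauto. cbv beta; ring.
  - eapply dpl_eq. apply dpl_plus; apply dpl_mul; eauto. cbv beta; ring.
Qed.
Lemma hd_scal c f f' : has_deriv f f' ->
  has_deriv (fun x => Cmul c (f x)) (fun x => Cmul c (f' x)).
Proof. intro H. eapply has_deriv_ext; [| | apply (hd_mul _ _ _ _ (hd_const c) H)];
  intros; simpl; [reflexivity| ring]. Qed.
Lemma hd_cexp m : has_deriv (fun x => Cexp (Cmul m (RtoC x)))
   (fun x => Cmul m (Cexp (Cmul m (RtoC x)))).
Proof.
  destruct m as [p q]. intro x. unfold Cexp, Cmul, RtoC; simpl.
  replace (p * x - q * 0) with (p * x) by ring. replace (p * 0 + q * x) with (q * x) by ring.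
  split.
  - apply (dpl_fext (fun t => exp (p * t) * cos (q * t))).
    intro t; f_equal; f_equal; ring.
    eapply dpl_eq. apply dpl_mul. apply dpl_exp. apply dpl_cos. cbv beta; ring.
  - apply (dpl_fext (fun t => exp (p * t) * sin (q * t))).
    intro t; f_equal; f_equal; ring.
    eapply dpl_eq. apply dpl_mul. apply dpl_exp. apply dpl_sin. cbv beta; ring.
Qed.
Lemma hd_pow u u' : has_deriv u u' -> forall m,
  has_deriv (fun x => Cpow (u x) (S m)) (fun x => Cmul (Cmul (RtoC (INR (S m))) (Cpow (u x) m)) (u' x)).
Proof.
  intros Hu m; induction m.
  - eapply has_deriv_ext; [| | apply (hd_mul _ _ _ _ Hu (hd_const Cone))]; intros; simpl.
    reflexivity. rewrite RtoC1. ring.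
  - eapply has_deriv_ext; [| | apply (hd_mul _ _ _ _ Hu IHm)]; intros; cbn [Cpow].
    reflexivity. rewrite (RtoC_INR_S (S m)), (RtoC_INR_S m). ring.
Qed.
Fixpoint es (L : list (Cplx * Cplx)) (x : R) : Cplx :=
  match L with
  | nil => Czero
  | (c, m) :: L' => Cadd (Cmul c (Cexp (Cmul m (RtoC x)))) (es L' x)
  end.
Definition dmap (L : list (Cplx * Cplx)) := map (fun t => (Cmul (fst t) (snd t), snd t)) L.

Lemma hd_es L : has_deriv (es L) (es (dmap L)).
Proof.
  induction L as [|[c m] L IH].
  - apply (has_deriv_ext (fun _ => Czero) _ (fun _ => Czero)); intros; try reflexivity.
    apply hd_const.
  - eapply has_deriv_ext; [| | apply (hd_add _ _ _ _ (hd_scal c _ _ (hd_cexp m)) IH)];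
    intros; simpl; [reflexivity | ring].
Qed.

Lemma es_app L1 L2 x : es (L1 ++ L2) x = Cadd (es L1 x) (es L2 x).
Proof. induction L1 as [|[c m] L IH]; simpl; [ring| rewrite IH; ring]. Qed.
Lemma es_scal c L x : es (map (fun t => (Cmul c (fst t), snd t)) L) x = Cmul c (es L x).
Proof. induction L as [|[c' m] L IH]; simpl; [ring| rewrite IH; ring]. Qed.
Lemma es_shift c m L x :
  es (map (fun s => (Cmul c (fst s), Cadd m (snd s))) L) x
  = Cmul (Cmul c (Cexp (Cmul m (RtoC x)))) (es L x).
Proof.
  induction L as [|[c2 m2] L IH]; simpl. ring.
  rewrite IH. replace (Cmul (Cadd m m2) (RtoC x)) with (Cadd (Cmul m (RtoC x)) (Cmul m2 (RtoC x))) by ring.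
  rewrite Cexp_add. ring.
Qed.
Definition prodL (L1 L2 : list (Cplx * Cplx)) :=
  flat_map (fun t => map (fun s => (Cmul (fst t) (fst s), Cadd (snd t) (snd s))) L2) L1.
Lemma es_prod L1 L2 x : es (prodL L1 L2) x = Cmul (es L1 x) (es L2 x).
Proof.
  induction L1 as [|[c m] L IH]; simpl. ring.
  rewrite es_app, IH. rewrite (es_shift c m L2 x). ring.
Qed.
Lemma es_const c x : es ((c, Czero) :: nil) x = c.
Proof. simpl. replace (Cmul Czero (RtoC x)) with Czero by ring. rewrite Cexp_zero. ring. Qed.
Lemma es_E mu s x : Cexp (Cmul mu (RtoC (x - s))) = es ((Cexp (Copp (Cmul mu (RtoC s))), mu) :: nil) x.
Proof.
  simpl. assert (H : Cmul mu (RtoC (x - s)) = Cadd (Copp (Cmul mu (RtoC s))) (Cmul mu (RtoC x)))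
    by (rewrite RtoC_sub; ring).
  rewrite H, Cexp_add. ring.
Qed.

Definition ES (f : R -> Cplx) := exists L, f = es L.
Lemma S_pt f L : (forall x, f x = es L x) -> ES f.
Proof. intro H; exists L; apply functional_extensionality; auto. Qed.
Lemma S_deriv f : ES f -> exists f', ES f' /\ has_deriv f f'.
Proof. intros [L ->]. exists (es (dmap L)); split; [exists (dmap L); auto | apply hd_es]. Qed.
Lemma S_const c : ES (fun _ => c).
Proof. apply (S_pt _ ((c, Czero) :: nil)); intro; rewrite es_const; auto. Qed.
Lemma S_E mu s : ES (fun x => Cexp (Cmul mu (RtoC (x - s)))).
Proof. eapply S_pt; intro; apply es_E. Qed.
Lemma S_add f g : ES f -> ES g -> ES (fun x => Cadd (f x) (g x)).
Proof. intros [L1 ->] [L2 ->]. apply (S_pt _ (L1 ++ L2)); intro; rewrite es_app; auto. Qed.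
Lemma S_mul f g : ES f -> ES g -> ES (fun x => Cmul (f x) (g x)).
Proof. intros [L1 ->] [L2 ->]. apply (S_pt _ (prodL L1 L2)); intro; rewrite es_prod; auto. Qed.
Lemma S_ext f g : (forall x, f x = g x) -> ES f -> ES g.
Proof. intros H Hf; replace g with f; auto; apply functional_extensionality; auto. Qed.
Lemma S_sub f g : ES f -> ES g -> ES (fun x => Csub (f x) (g x)).
Proof. intros. apply (S_ext (fun x => Cadd (f x) (Cmul (Copp Cone) (g x)))).
  intro; unfold Csub; f_equal; ring. apply S_add; auto. apply S_mul; auto. apply S_const. Qed.
Lemma S_pow f m : ES f -> ES (fun x => Cpow (f x) m).
Proof. intro H; induction m; simpl. apply S_const. apply S_mul; auto. Qed.

Section TT.
Variable om : Cplx.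
Definition T (lam : Cplx) (m : nat) (f : R -> Cplx) :=
  exists L, f = es L /\
    Forall (fun t => exists j, (j <= m)%nat /\ snd t = Cadd lam (Cmul (RtoC (INR j)) om)) L.
Lemma T_pt lam m f L : (forall x, f x = es L x) ->
    Forall (fun t => exists j, (j <= m)%nat /\ snd t = Cadd lam (Cmul (RtoC (INR j)) om)) L ->
    T lam m f.
Proof. intros H H2; exists L; split; auto; apply functional_extensionality; auto. Qed.
Lemma T_ext lam m f g : (forall x, f x = g x) -> T lam m f -> T lam m g.
Proof. intros H Hf; replace g with f; auto; apply functional_extensionality; auto. Qed.
Lemma T_S lam m f : T lam m f -> ES f.
Proof. intros [L [H _]]; exists L; auto. Qed.
Lemma T_const c m : T Czero m (fun _ => c).
Proof. apply (T_pt _ _ _ ((c, Czero) :: nil)). intro; rewrite es_const; auto.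
  constructor; [|constructor]. exists 0%nat; split; [lia|]. simpl. rewrite RtoC0; ring. Qed.
Lemma T_E0 mu s : T mu 0 (fun x => Cexp (Cmul mu (RtoC (x - s)))).
Proof. eapply T_pt. intro; apply es_E.
  constructor; [|constructor]. exists 0%nat; split; [lia|]. simpl. rewrite RtoC0; ring. Qed.
Lemma T_E1 s : T Czero 1 (fun x => Cexp (Cmul om (RtoC (x - s)))).
Proof. eapply T_pt. intro; apply es_E.
  constructor; [|constructor]. exists 1%nat; split; [lia|]. simpl. rewrite RtoC1; ring. Qed.
Lemma T_add lam m f g : T lam m f -> T lam m g -> T lam m (fun x => Cadd (f x) (g x)).
Proof. intros [L1 [-> H1]] [L2 [-> H2]]. apply (T_pt _ _ _ (L1 ++ L2)).
  intro; rewrite es_app; auto. apply Forall_app; auto. Qed.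
Lemma T_scal c lam m f : T lam m f -> T lam m (fun x => Cmul c (f x)).
Proof. intros [L [-> H]]. apply (T_pt _ _ _ (map (fun t => (Cmul c (fst t), snd t)) L)).
  intro; rewrite es_scal; auto.
  apply Forall_forall; intros t Ht. apply in_map_iff in Ht. destruct Ht as [t0 [<- Ht0]].
  rewrite Forall_forall in H. apply H in Ht0. exact Ht0. Qed.
Lemma T_scal_r c lam m f : T lam m f -> T lam m (fun x => Cmul (f x) c).
Proof. intro H. apply (T_ext _ _ (fun x => Cmul c (f x))). intro; ring. apply T_scal; auto. Qed.
Lemma T_sub lam m f g : T lam m f -> T lam m g -> T lam m (fun x => Csub (f x) (g x)).
Proof. intros. apply (T_ext _ _ (fun x => Cadd (f x) (Cmul (Copp Cone) (g x)))).
  intro; unfold Csub; f_equal; ring. apply T_add; auto. apply T_scal; auto. Qed.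
Lemma T_mul l1 m1 l2 m2 l3 m3 f g : T l1 m1 f -> T l2 m2 g -> Cadd l1 l2 = l3 -> (m1 + m2 <= m3)%nat ->
  T l3 m3 (fun x => Cmul (f x) (g x)).
Proof.
  intros [L1 [-> H1]] [L2 [-> H2]] E3 Hm. apply (T_pt _ _ _ (prodL L1 L2)).
  intro; rewrite es_prod; auto.
  apply Forall_forall; intros t Ht. unfold prodL in Ht. apply in_flat_map in Ht.
  destruct Ht as [t1 [Ht1 Ht]]. apply in_map_iff in Ht. destruct Ht as [t2 [<- Ht2]].
  rewrite Forall_forall in H1, H2. destruct (H1 _ Ht1) as [j1 [Hj1 E1]].
  destruct (H2 _ Ht2) as [j2 [Hj2 E2]]. exists (j1 + j2)%nat; split; [lia|].
  simpl. rewrite E1, E2, <- E3, plus_INR, RtoC_add. ring.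
Qed.
Lemma T_pow f m : T Czero 1 f -> T Czero m (fun x => Cpow (f x) m).
Proof. intro H; induction m; simpl. apply T_const.
  eapply T_mul; [exact H | exact IHm | ring | lia]. Qed.
End TT.

Definition prodC (ls : list Cplx) (mu : Cplx) := fold_right (fun l acc => Cmul (Csub mu l) acc) Cone ls.

Lemma applyL_es ls : forall L, applyL ls (es L) (es (map (fun t => (Cmul (fst t) (prodC ls (snd t)), snd t)) L)).
Proof.
  induction ls as [|l ls IH]; intro L.
  - replace (map _ L) with L. constructor.
    induction L as [|[c m] L IHL]; [reflexivity|]. cbn [map]. f_equal; [cbn [fst snd prodC fold_right]; f_equal; ring | exact IHL].
  - econstructor. apply hd_es.
    set (L1 := map (fun t => (Cmul (fst t) (Csub (snd t) l), snd t)) L).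
    assert (E1 : (fun x => Csub (es (dmap L) x) (Cmul l (es L x))) = es L1).
    { apply functional_extensionality; intro x. unfold L1, dmap.
      induction L as [|[c m] L IHL]; simpl. ring. rewrite <- IHL. ring. }
    rewrite E1. replace (map _ L) with (map (fun t => (Cmul (fst t) (prodC ls (snd t)), snd t)) L1).
    apply IH. unfold L1. rewrite map_map. apply map_ext. intros [c m]; simpl. f_equal; ring.
Qed.

Lemma prodC_in ls mu : In mu ls -> prodC ls mu = Czero.
Proof. induction ls as [|l ls IH]; simpl; intros H; [contradiction|].
  destruct H as [<-|H]. ring. rewrite IH; auto; ring. Qed.

Lemma Dn_es n : forall L, Dn n (es L) (es (Nat.iter n dmap L)).
Proof. induction n; intro L. constructor. econstructor. apply hd_es.
  rewrite Nat.iter_succ_r. apply IHn. Qed.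

Lemma in_E_es ls L : Forall (fun t => In (snd t) ls) L -> in_E ls (es L).
Proof.
  intro H. split.
  - intro n. eexists. apply Dn_es.
  - replace (fun _ : R => Czero) with (es (map (fun t => (Cmul (fst t) (prodC ls (snd t)), snd t)) L)).
    apply applyL_es. apply functional_extensionality; intro x.
    induction L as [|[c m] L IHL]; simpl. reflexivity.
    inversion H; subst. rewrite IHL; auto. simpl in *. rewrite prodC_in; auto. ring.
Qed.

Lemma in_E_T l0 om n f : T om l0 n f -> in_E (lams l0 om n) f.
Proof.
  intros [L [-> H]]. apply in_E_es. rewrite Forall_forall in *. intros t Ht.
  destruct (H t Ht) as [j [Hj ->]]. unfold lams. apply in_map_iff. exists j; split; auto.
  apply in_seq. lia.
Qed.
Lemma key (u u' : R -> Cplx) (a0 : R) :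
  ES u -> ES u' -> has_deriv u u' -> u a0 = Czero ->
  forall k g, ES g ->
   (forall j, (j < k)%nat -> deriv_at j (fun x => Cmul (Cpow (u x) k) (g x)) a0 Czero) /\
   deriv_at k (fun x => Cmul (Cpow (u x) k) (g x)) a0
      (Cmul (Cmul (RtoC (INR (fact k))) (Cpow (u' a0) k)) (g a0)).
Proof.
  intros Su Su' Hu Hu0. induction k; intros g Sg.
  - split. intros j Hj; lia.
    exists (fun x => Cmul (Cpow (u x) 0) (g x)); split; [constructor|].
    simpl. rewrite RtoC1. ring.
  - destruct (S_deriv g Sg) as [g' [Sg' Hg']].
    set (g1 := fun x => Cadd (Cmul (Cmul (RtoC (INR (S k))) (u' x)) (g x)) (Cmul (u x) (g' x))).
    assert (Sg1 : ES g1).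
    { unfold g1. apply S_add; apply S_mul; auto. apply S_mul; auto. apply S_const. }
    assert (Hd : has_deriv (fun x => Cmul (Cpow (u x) (S k)) (g x)) (fun x => Cmul (Cpow (u x) k) (g1 x))).
    { eapply has_deriv_ext; [| | apply (hd_mul _ _ _ _ (hd_pow _ _ Hu k) Hg')]; intros x.
      reflexivity. unfold g1. cbn [Cpow]. ring. }
    destruct (IHk g1 Sg1) as [H1 H2]. split.
    + intros j Hj. destruct j.
      * exists (fun x => Cmul (Cpow (u x) (S k)) (g x)); split; [constructor|].
        cbn [Cpow]. rewrite Hu0. ring.
      * destruct (H1 j ltac:(lia)) as [G [HG HGa]]. exists G; split; auto. econstructor; eauto.
    + destruct H2 as [G [HG HGa]]. exists G. split. econstructor; eauto. rewrite HGa.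
      unfold g1. rewrite Hu0. change (fact (S k)) with (S k * fact k)%nat.
      rewrite mult_INR, RtoC_mul. cbn [Cpow]. ring.
Qed.

Definition Clim (f : R -> Cplx) (L : Cplx) (a : R) :=
  limit1_in (fun x => Re (f x)) (fun x => x <> a) (Re L) a /\
  limit1_in (fun x => Im (f x)) (fun x => x <> a) (Im L) a.

Lemma lim_ext (f g : R -> R) l a : (forall x, x <> a -> f x = g x) ->
  limit1_in f (fun x => x <> a) l a -> limit1_in g (fun x => x <> a) l a.
Proof.
  unfold limit1_in, limit_in; intros H H0 eps He. destruct (H0 eps He) as [alp [Ha Hb]].
  exists alp; split; auto. intros x [Dx Hx]. rewrite <- H; auto.
Qed.
Lemma Clim_mul f g lf lg a : Clim f lf a -> Clim g lg a -> Clim (fun x => Cmul (f x) (g x)) (Cmul lf lg) a.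
Proof.
  intros [H1 H2] [H3 H4]; split; simpl.
  - apply (limit_minus (fun x => Re (f x) * Re (g x)) (fun x => Im (f x) * Im (g x))); apply limit_mul; auto.
  - apply (limit_plus (fun x => Re (f x) * Im (g x)) (fun x => Im (f x) * Re (g x))); apply limit_mul; auto.
Qed.
Lemma Clim_const c a : Clim (fun _ => c) c a.
Proof. split; apply (limit_free (fun _ => _) _ 0 a). Qed.
Lemma Clim_pow f l a m : Clim f l a -> Clim (fun x => Cpow (f x) m) (Cpow l m) a.
Proof. intro H; induction m; simpl. apply Clim_const. apply Clim_mul; auto. Qed.

Lemma cont_lim f a : continuity_pt f a -> limit1_in f (fun x => x <> a) (f a) a.
Proof.
  unfold continuity_pt, continue_in, limit1_in, limit_in, D_x, no_cond.
  intros H eps He. destruct (H eps He) as [alp [Ha Hb]]. exists alp; split; auto.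
  intros x [Dx Hd]. apply Hb. split; auto.
Qed.
Lemma Clim_cont g g' a : has_deriv g g' -> Clim g (g a) a.
Proof.
  intro H; destruct (H a) as [H1 H2]; split; apply cont_lim; apply derivable_continuous_pt.
  exists (Re (g' a)); exact H1. exists (Im (g' a)); exact H2.
Qed.
Lemma dq_lim f a l : derivable_pt_lim f a l ->
  limit1_in (fun x => (f x - f a) / (x - a)) (fun x => x <> a) l a.
Proof.
  intros H eps Heps. destruct (H eps Heps) as [del Hd]. exists del; split; [apply cond_pos|].
  intros x [Hx Hdist]. simpl in *. unfold R_dist in *.
  specialize (Hd (x - a)). replace (a + (x - a)) with x in Hd by ring. apply Hd.
  intro E; apply Hx; lra. exact Hdist.
Qed.
Lemma Clim_dq u u' a : has_deriv u u' -> u a = Czero ->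
  Clim (fun x => Cmul (u x) (RtoC (/ (x - a)))) (u' a) a.
Proof.
  intros H H0. destruct (H a) as [H1 H2]. split.
  - eapply lim_ext; [| apply (dq_lim _ _ _ H1)]. intros x Hx. simpl. rewrite H0. simpl.
    unfold Rdiv; ring.
  - eapply lim_ext; [| apply (dq_lim _ _ _ H2)]. intros x Hx. simpl. rewrite H0. simpl.
    unfold Rdiv; ring.
Qed.
Definition uA om a x := Csub (Cexp (Cmul om (RtoC (x - a)))) Cone.
Definition uA' om a x := Cmul om (Cexp (Cmul om (RtoC (x - a)))).
Definition Dv om a b := Csub Cone (Cexp (Cmul om (RtoC (a - b)))).
Definition QB om a b x := Cdiv (Csub Cone (Cexp (Cmul om (RtoC (x - b))))) (Dv om a b).
Definition QB' om a b x := Cdiv (Copp (Cmul om (Cexp (Cmul om (RtoC (x - b)))))) (Dv om a b).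
Definition Kk om k := Cmul (RtoC (INR (fact k))) (Cpow om k).
Definition gA l0 om a b n k x := Cmul (Cdiv (Cexp (Cmul l0 (RtoC (x - a)))) (Kk om k)) (Cpow (QB om a b x) (n - k)).
Definition gB (l0 om : Cplx) (a b : R) (n k : nat) (x : R) := Cmul (Cdiv (Cexp (Cmul l0 (RtoC (x - a)))) (Kk om k)) (Cpow (uA om a x) k).

Lemma hd_E mu s : has_deriv (fun x => Cexp (Cmul mu (RtoC (x - s)))) (fun x => Cmul mu (Cexp (Cmul mu (RtoC (x - s))))).
Proof.
  eapply has_deriv_ext; [| | apply (hd_es ((Cexp (Copp (Cmul mu (RtoC s))), mu) :: nil))];
  intro x; rewrite es_E; [reflexivity|]. simpl. ring.
Qed.

Theorem mainTheorem12 (l0 om : Cplx) (n : nat) (a b : R) :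
  om <> Czero -> a <> b ->
  Cexp (Cmul om (RtoC (b - a))) <> Cone ->
  forall k : nat, (k <= n)%nat ->
    in_E (lams l0 om n) (pnk l0 om a b n k) /\
    zero_of_order k (pnk l0 om a b n k) a /\
    zero_of_order (n - k) (pnk l0 om a b n k) b /\
    limit1_in (fun x => INR (fact k) * (Re (pnk l0 om a b n k x) / (x - a) ^ k))
              (fun x => x <> a) 1 a /\
    limit1_in (fun x => INR (fact k) * (Im (pnk l0 om a b n k x) / (x - a) ^ k))
              (fun x => x <> a) 0 a /\
    deriv_at k (pnk l0 om a b n k) a Cone.
Proof.
  intros Hom Hab Hexp k Hk.
  assert (HK1 : RtoC (INR (fact k)) <> Czero) by (apply RtoC_neq0, INR_fact_neq_0).
  assert (HK2 : Cpow om k <> Czero) by (apply Cpow_neq0; auto).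
  assert (HK : Kk om k <> Czero) by (apply Cmul_neq0; auto).
  assert (HD : Dv om a b <> Czero).
  { intro E. apply Hexp. unfold Dv in E.
    assert (E2 : Cexp (Cmul om (RtoC (a - b))) = Cone).
    { replace (Cexp (Cmul om (RtoC (a - b)))) with (Csub Cone (Csub Cone (Cexp (Cmul om (RtoC (a - b)))))) by ring.
      rewrite E. ring. }
    replace (Cexp (Cmul om (RtoC (b - a)))) with
      (Cmul (Cexp (Cmul om (RtoC (b - a)))) (Cexp (Cmul om (RtoC (a - b))))) by (rewrite E2; ring).
    rewrite <- Cexp_add. replace (Cadd (Cmul om (RtoC (b - a))) (Cmul om (RtoC (a - b)))) with Czero.
    apply Cexp_zero. rewrite !RtoC_sub. ring. }
  assert (Hp : pnk l0 om a b n k = fun x => Cmul (Cpow (uA om a x) k) (gA l0 om a b n k x)).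
  { apply functional_extensionality; intro x. unfold pnk, gA, uA, QB, Kk, Dv, Cdiv. ring. }
  assert (Hp2 : pnk l0 om a b n k = fun x => Cmul (Cpow (QB om a b x) (n - k)) (gB l0 om a b n k x)).
  { apply functional_extensionality; intro x. unfold pnk, gB, uA, QB, Kk, Dv, Cdiv. ring. }
  assert (SuA : ES (uA om a)). { unfold uA. apply S_sub. apply S_E. apply S_const. }
  assert (SuA' : ES (uA' om a)). { unfold uA'. apply S_mul. apply S_const. apply S_E. }
  assert (SQ : ES (QB om a b)). { unfold QB, Cdiv. apply S_mul; [|apply S_const]. apply S_sub. apply S_const. apply S_E. }
  assert (SQ' : ES (QB' om a b)). { unfold QB', Cdiv. apply S_mul; [|apply S_const].
    apply (S_ext (fun x => Cmul (Copp om) (Cexp (Cmul om (RtoC (x - b)))))). intro; ring.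
    apply S_mul. apply S_const. apply S_E. }
  assert (SgA : ES (gA l0 om a b n k)). { unfold gA, Cdiv. apply S_mul. apply S_mul. apply S_E. apply S_const. apply S_pow; auto. }
  assert (SgB : ES (gB l0 om a b n k)). { unfold gB, Cdiv. apply S_mul. apply S_mul. apply S_E. apply S_const. apply S_pow; auto. }
  assert (HuA : has_deriv (uA om a) (uA' om a)).
  { eapply has_deriv_ext; [| | apply (hd_add _ _ _ _ (hd_E om a) (hd_const (Copp Cone)))];
    intro x; unfold uA, uA'; [reflexivity | ring]. }
  assert (HQ : has_deriv (QB om a b) (QB' om a b)).
  { eapply has_deriv_ext; [| | apply (hd_mul _ _ _ _ (hd_add _ _ _ _ (hd_const Cone) (hd_scal (Copp Cone) _ _ (hd_E om b))) (hd_const (Cinv (Dv om a b))))];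
    intro x; unfold QB, QB', Cdiv, Csub; ring. }
  assert (HuA0 : uA om a a = Czero). { unfold uA. rewrite Cexp_self. ring. }
  assert (HQ0 : QB om a b b = Czero). { unfold QB, Cdiv. rewrite Cexp_self. ring. }
  assert (Hval : Cmul (Cmul (RtoC (INR (fact k))) (Cpow (uA' om a a) k)) (gA l0 om a b n k a) = Cone).
  { unfold uA', gA, QB. rewrite !Cexp_self.
    replace (Cdiv (Csub Cone (Cexp (Cmul om (RtoC (a - b))))) (Dv om a b)) with Cone
      by (unfold Dv; field; auto).
    rewrite Cpow_one. replace (Cmul om Cone) with om by ring. unfold Kk. field. auto. }
  destruct (key _ _ a SuA SuA' HuA HuA0 k _ SgA) as [HA1 HA2].
  destruct (key _ _ b SQ SQ' HQ HQ0 (n - k) _ SgB) as [HB1 HB2].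
  rewrite <- Hp in HA1, HA2. rewrite <- Hp2 in HB1, HB2. rewrite Hval in HA2.
  destruct (S_deriv _ SgA) as [gA' [_ HgA']].
  assert (Hlim : Clim (fun x => Cmul (RtoC (INR (fact k)))
      (Cmul (Cpow (Cmul (uA om a x) (RtoC (/ (x - a)))) k) (gA l0 om a b n k x))) Cone a).
  { replace Cone with (Cmul (RtoC (INR (fact k))) (Cmul (Cpow (uA' om a a) k) (gA l0 om a b n k a)))
      by (rewrite <- Hval; ring).
    apply Clim_mul. apply Clim_const. apply Clim_mul. apply Clim_pow. apply Clim_dq; auto.
    apply (Clim_cont _ _ a HgA'). }
  split; [|split; [|split; [|split; [|split]]]].
  - apply in_E_T. unfold pnk, Cdiv.
    apply (T_mul om l0 k Czero (n - k) l0 n); [| | ring | lia].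
    apply (T_mul om l0 0 Czero k l0 k); [| | ring | lia].
    apply T_scal_r, T_E0. apply T_pow; apply T_sub; [apply T_E1|apply T_const].
    apply T_pow; apply T_scal_r; apply T_sub; [apply T_const | apply T_E1].
  - split; auto. exists Cone; split; auto. intro E; injection E; lra.
  - split; auto. eexists; split; [exact HB2|].
    repeat apply Cmul_neq0.
    + apply RtoC_neq0, INR_fact_neq_0.
    + apply Cpow_neq0. unfold QB'. rewrite Cexp_self. unfold Cdiv. apply Cmul_neq0.
      replace (Copp (Cmul om Cone)) with (Cmul (Copp Cone) om) by ring. apply Cmul_neq0; auto.
      intro E; injection E; lra. apply Cinv_neq0; auto.
    + apply Cexp_neq0.
    + apply Cinv_neq0; auto.
    + apply Cpow_neq0. unfold uA. intro E. apply Hexp.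
      replace (Cexp (Cmul om (RtoC (b - a)))) with (Cadd (Csub (Cexp (Cmul om (RtoC (b - a)))) Cone) Cone) by ring.
      rewrite E; ring.
  - destruct Hlim as [L1 _]. change (Re Cone) with 1 in L1.
    eapply lim_ext; [|exact L1]. intros x Hx. cbv beta. rewrite Cpow_mul_R, Hp. cbv beta.
    set (P := Cpow (uA om a x) k). set (G := gA l0 om a b n k x).
    replace (Cmul (RtoC (INR (fact k))) (Cmul (Cmul P (RtoC ((/ (x - a)) ^ k))) G))
      with (Cmul (RtoC (INR (fact k) * (/ (x - a)) ^ k)) (Cmul P G)) by (rewrite RtoC_mul; ring).
    rewrite Re_RtoC_mul, pow_inv. unfold Rdiv; ring.
  - destruct Hlim as [_ L1]. change (Im Cone) with 0 in L1.
    eapply lim_ext; [|exact L1]. intros x Hx. cbv beta. rewrite Cpow_mul_R, Hp. cbv beta.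
    set (P := Cpow (uA om a x) k). set (G := gA l0 om a b n k x).
    replace (Cmul (RtoC (INR (fact k))) (Cmul (Cmul P (RtoC ((/ (x - a)) ^ k))) G))
      with (Cmul (RtoC (INR (fact k) * (/ (x - a)) ^ k)) (Cmul P G)) by (rewrite RtoC_mul; ring).
    rewrite Im_RtoC_mul, pow_inv. unfold Rdiv; ring.
  - exact HA2.
Qed.
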